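(* Fix any permutation $\pi_\alpha$ of $\mathcal{I}_L$ and, for each $m\in\mathcal{I}_L$, define the compressed codeword $$\delta_m=\Big(\sum_{k\in\mathcal{J}_{\pi_\alpha^{-1}(m)}} v_{m,k}\Big)\bmod \Lambda_{J_m^{\min}},$$ where $J_m^{\min}$ is the minimal element of $\mathcal{J}_{\pi_\alpha^{-1}(m)}$. Then this compression is information lossless: $(v_1,\dots,v_L)$ can be recovered exactly from $(\delta_1,\dots,\delta_L)$, i.e. $(v_1,\dots,v_L)$ is a deterministic function of $(\delta_1,\dots,\delta_L)$ (together with the known dithers $d_1,\dots,d_L$ and the fixed system parameters).
   Context: Notation: for a lattice $\Lambda\subset\mathbb{R}^n$, $Q_\Lambda(x)$ is the nearest point of $\Lambda$ to $x$ (ties broken by a fixed rule), $x\bmod\Lambda=x-Q_\Lambda(x)$, and $\mathcal{V}(\Lambda)=\{x:Q_\Lambda(x)=0\}$ is the fundamental Voronoi region. $\mathcal{I}_j=\{1,\dots,j\}$, $\mathcal{I}_0=\emptyset$, and for $\mathcal{S}\subseteq\mathcal{I}_L$, $\overline{\mathcal{S}}=\mathcal{I}_L\setminus\mathcal{S}$. Logarithms are base 2. Lattice chain (Construction A): $\gamma$ is a prime, $L,n,K$ are positive integers, $G\in\mathbb{F}_\gamma^{n\times K}$ has full column rank over $\mathbb{F}_\gamma$, $B\in\mathbb{R}^{n\times n}$ is invertible, and $g:\mathbb{F}_\gamma\to\{0,\dots,\gamma-1\}$ is the natural bijection applied entrywise. For integers $0\le i_1\le\cdots\le i_{2L}\le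 K$ and $k\in\mathcal{I}_{2L}$, let $G_k$ consist of the first $i_k$ columns of $G$ and $\Lambda_k=B\big(\gamma^{-1}g(\{G_kw:w\in\mathbb{F}_\gamma^{i_k}\})+\mathbb{Z}^n\big)$, so $\Lambda_1\subseteq\cdots\subseteq\Lambda_{2L}$. Write $\mathcal{V}_k=\mathcal{V}(\Lambda_k)$. Sources: $\pi$ is a permutation of $\mathcal{I}_{2L}$ with $\Lambda_{\pi(2l-1)}\subseteq\Lambda_{\pi(2l)}$ for all $l\in\mathcal{I}_L$; $\Lambda_{s,l}=\Lambda_{\pi(2l-1)}$ (shaping lattice), $\Lambda_{c,l}=\Lambda_{\pi(2l)}$ (coding lattice), codebook $\mathcal{C}_l=\Lambda_{c,l}\cap\mathcal{V}(\Lambda_{s,l})$. The codewords $t_1,\dots,t_L$ are independent with $t_l$ uniform on $\mathcal{C}_l$. Scalars $\beta_l>0$; dithers $d_l$ are uniform on $\mathcal{V}(\Lambda_{s,l})/\beta_l$, mutually independent and independent of the $t_l$. For $k\in\mathcal{I}_{2L-1}$, $\mathcal{L}_k=\{l\in\mathcal{I}_L:\Lambda_{s,l}\subseteq\Lambda_k\subseteq\Lambda_{k+1}\subseteq\Lambda_{c,l}\}$. Computed codewords: $A=(a_{ml})\in\mathbb{Z}^{L\times L}$ is an integer matrix whose reduction mod $\gamma$ is invertible over $\mathbb{F}_\gamma$. For $\mathcal{S},\mathcal{S}'\subseteq\mathcal{I}_L$, $A(\mathcal{S},\mathcal{S}')$ is the submatrix with rows in $\mathcal{S}$ and columns in $\mathcal{S}'$;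 ranks are computed over $\mathbb{F}_\gamma$ after reduction mod $\gamma$, and a matrix with no rows or no columns has rank $0$. For $m\in\mathcal{I}_L$, $v_m=\big(\sum_{l=1}^L a_{ml}(t_l-Q_{\Lambda_{s,l}}(t_l-\beta_l d_l))\big)\bmod\Lambda_1$ and, for $k\in\mathcal{I}_{2L-1}$, $v_{m,k}=Q_{\Lambda_{k+1}}(v_m)\bmod\Lambda_k$. Index sets: for a permutation $\pi_\alpha$ of $\mathcal{I}_L$, $\Pi_\alpha(\mathcal{S})=\{\pi_\alpha(i):i\in\mathcal{S}\}$, and for $m\in\mathcal{I}_L$, $\mathcal{J}_m=\{k\in\mathcal{I}_{2L-1}:\operatorname{rank}A(\Pi_\alpha(\overline{\mathcal{I}_{m-1}}),\mathcal{L}_k)=\operatorname{rank}A(\Pi_\alpha(\overline{\mathcal{I}_m}),\mathcal{L}_k)+1\}$. If $\mathcal{J}_{\pi_\alpha^{-1}(m)}$ is empty, $\delta_m:=0$. *)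

(* Defs.v *)
From HB Require Import structures.
From mathcomp Require Import all_boot all_order all_algebra all_fingroup.
From mathcomp Require Import zify.
From mathcomp Require Import boolp reals.
Set Implicit Arguments. Unset Strict Implicit. Unset Printing Implicit Defensive.
Import Order.TTheory GRing.Theory Num.Theory.
Local Open Scope ring_scope.

(* Conventions: all indices are 0-based.  Lattice index k = 0..2L-1 stands for
   Lambda_{k+1}; source index l : 'I_L stands for l+1; m : 'I_L stands for m+1. *)

Section Defs.
Variable R : realType.
Variable n : nat.
Local Notation vec := 'cV[R]_n.

(* Construction A lattice Lambda_k = B (gamma^{-1} g(C_k) + Z^n), where C_k is
   the code generated by the first i_k columns of G. *)
Definition inLat (gamma K : nat) (G : 'M['F_gamma]_(n, K)) (B : 'M[R]_n)
  (i : nat -> nat) (k : nat) (x : vec) : Prop :=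
  exists (w : 'cV['F_gamma]_K) (z : 'cV[int]_n),
    (forall j : 'I_K, (i k <= j)%N -> w j 0 = 0) /\
    x = B *m ((gamma%:R)^-1 *: map_mx (fun a : 'F_gamma => (nat_of_ord a)%:R) (G *m w)
              + map_mx (fun c : int => c%:~R) z).

Definition sqnorm (x : vec) : R := \sum_(j < n) (x j 0) ^+ 2.

(* Q is a nearest-point quantizer for the lattice P, with a tie-breaking rule that
   is compatible with lattice translations (V(P) is a fundamental region). *)
Definition is_nearest_quantizer (P : vec -> Prop) (Q : vec -> vec) : Prop :=
  [/\ forall x, P (Q x),
      forall x y, P y -> sqnorm (x - Q x) <= sqnorm (x - y)
    & forall x y, P y -> Q (x + y) = Q x + y].

Definition modL (Q : vec -> vec) (x : vec) : vec := x - Q x.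

Definition lat_sub (P1 P2 : vec -> Prop) : Prop := forall x, P1 x -> P2 x.

End Defs.

Lemma sh_lt (L : nat) (l : 'I_L) : (2 * l < 2 * L)%N.
Proof. have := ltn_ord l; lia. Qed.
Lemma co_lt (L : nat) (l : 'I_L) : (2 * l + 1 < 2 * L)%N.
Proof. have := ltn_ord l; lia. Qed.

(* shaping / coding lattice indices (0-based lattice indices) *)
Definition sh (L : nat) (pi : {perm 'I_(2 * L)}) (l : 'I_L) : nat :=
  nat_of_ord (pi (Ordinal (sh_lt l))).
Definition co (L : nat) (pi : {perm 'I_(2 * L)}) (l : 'I_L) : nat :=
  nat_of_ord (pi (Ordinal (co_lt l))).

Definition subrank (F : fieldType) (L : nat) (M : 'M[F]_L) (S S' : {set 'I_L}) : nat :=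
  \rank (mxsub (fun a : 'I_#|S| => enum_val a) (fun b : 'I_#|S'| => enum_val b) M).

Definition Ared (gamma L : nat) (A : 'M[int]_L) : 'M['F_gamma]_L :=
  map_mx (fun z : int => z%:~R) A.

Section System.
Variables (R : realType) (n L : nat).
Variable lat : nat -> 'cV[R]_n -> Prop.
Variable Q : nat -> 'cV[R]_n -> 'cV[R]_n.
Variable pi : {perm 'I_(2 * L)}.

Definition Lset (k : nat) : {set 'I_L} :=
  [set l : 'I_L | `[< lat_sub (lat (sh pi l)) (lat k) /\ lat_sub (lat k) (lat k.+1)
                    /\ lat_sub (lat k.+1) (lat (co pi l)) >]].

Variable gamma : nat.
Variable A : 'M[int]_L.
Variable palpha : {perm 'I_L}.

(* J_m (m 0-based); only k with k+1 < 2L, i.e. k in I_{2L-1} *)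
Definition Jset (m : 'I_L) : {set 'I_(2 * L)} :=
  [set k : 'I_(2 * L) | (k.+1 < 2 * L)%N &&
     (subrank (Ared gamma A) (palpha @: [set j : 'I_L | (m <= j)%N]) (Lset k) ==
      (subrank (Ared gamma A) (palpha @: [set j : 'I_L | (m < j)%N]) (Lset k)).+1)].

Variable beta : 'I_L -> R.

Definition vv (t d : 'I_L -> 'cV[R]_n) (m : 'I_L) : 'cV[R]_n :=
  modL (Q 0) (\sum_(l < L) (A m l)%:~R *: (t l - Q (sh pi l) (t l - beta l *: d l))).

Definition vmk (t d : 'I_L -> 'cV[R]_n) (m : 'I_L) (k : nat) : 'cV[R]_n :=
  modL (Q k) (Q k.+1 (vv t d m)).

Definition delta (t d : 'I_L -> 'cV[R]_n) (m : 'I_L) : 'cV[R]_n :=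
  let J := Jset ((palpha^-1)%g m) in
  if J == set0 then 0
  else modL (Q (\big[minn/(2 * L)%N]_(k in J) (nat_of_ord k)))
            (\sum_(k in J) vmk t d m k).

End System.

(* Main.v *)
Require Import Defs.
From HB Require Import structures.
From mathcomp Require Import all_boot all_order all_algebra all_fingroup.
From mathcomp Require Import boolp reals.
From mathcomp Require Import zify.
Import Order.TTheory GRing.Theory Num.Theory.
Local Open Scope ring_scope.
Set Implicit Arguments. Unset Strict Implicit. Unset Printing Implicit Defensive.

Section Lat.
Variables (R : realType) (n gamma K : nat) (G : 'M['F_gamma]_(n, K)) (B : 'M[R]_n) (i : nat -> nat).
Hypothesis gp : prime gamma.

Definition latc k (x : 'cV[R]_n) : Prop := exists (w : 'cV['F_gamma]_K) (y : 'cV[int]_n),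
 [/\ (forall j : 'I_K, (i k <= j)%N -> w j 0 = 0),
     map_mx (fun c : int => (c%:~R : 'F_gamma)) y = G *m w &
     x = B *m ((gamma%:R)^-1 *: map_mx (fun c : int => (c%:~R : R)) y)].

Lemma gammaR : (gamma%:R : R) != 0.
Proof. by rewrite pnatr_eq0 -lt0n prime_gt0. Qed.
Lemma charF : (gamma%:R : 'F_gamma) = 0.
Proof. exact: pchar_Fp_0. Qed.
Lemma natF (a : 'F_gamma) : ((nat_of_ord a)%:R : 'F_gamma) = a.
Proof. exact: natr_Zp. Qed.
Lemma intr_natE (T : pzRingType) (m : nat) : ((m%:Z)%:~R : T) = m%:R.
Proof. by []. Qed.

Lemma latcE k x : inLat G B i k x <-> latc k x.
Proof.
split.
  move=> [w [z [Hw ->]]].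
  exists w, (\matrix_(a, b) ((nat_of_ord ((G *m w) a b))%:Z + (gamma%:Z) * z a b)).
  split => //.
    apply/matrixP => a b; rewrite !mxE intrD intrM intr_natE natF.
    by rewrite intr_natE charF mul0r addr0.
  congr (B *m _); apply/matrixP => a b; rewrite !mxE intrD intrM !intr_natE.
  by rewrite mulrDr mulrA mulVf ?gammaR // mul1r.
move=> [w [y [Hw Hy ->]]].
have dv : forall a b, (gamma%:Z %| y a b - (nat_of_ord ((G *m w) a b))%:Z)%Z.
  move=> a b; rewrite (dvdz_pcharf (pchar_Fp gp)) rmorphB /= intr_natE natF.
  by move/matrixP: Hy => /(_ a b); rewrite mxE => ->; rewrite subrr.
set gw := G *m w in dv *.
exists w, (\matrix_(a,b) ((y a b - (nat_of_ord ((G *m w) a b))%:Z) %/ gamma%:Z)%Z).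
split => //.
congr (B *m _); apply/matrixP => a b; rewrite !mxE.
rewrite -{1}(subrK ((nat_of_ord (gw a b))%:Z) (y a b)) -(divzK (dv a b)).
rewrite intrD intrM !intr_natE mulrDr mulrCA mulVf ?gammaR // mulr1 addrC.
by rewrite /gw !mxE.
Qed.

Lemma latc0 k : latc k 0.
Proof.
exists 0, 0; split.
- by move=> j _; rewrite mxE.
- by rewrite mulmx0; apply/matrixP => a b; rewrite !mxE.
- have -> : map_mx (fun c : int => (c%:~R : R)) 0 = 0 :> 'cV_n.
    by apply/matrixP => a b; rewrite !mxE.
  by rewrite scaler0 mulmx0.
Qed.

Lemma latc_add k x x' : latc k x -> latc k x' -> latc k (x + x').
Proof.
move=> [w [y [Hw Hy ->]]] [w' [y' [Hw' Hy' ->]]].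
exists (w + w'), (y + y'); split.
- by move=> j hj; rewrite mxE Hw ?Hw' ?addr0.
- rewrite mulmxDr -Hy -Hy'; apply/matrixP => a b; by rewrite !mxE intrD.
- rewrite -mulmxDr -scalerDr; congr (B *m (_ *: _)).
  by apply/matrixP => a b; rewrite !mxE intrD.
Qed.

Lemma latc_zs k c x : latc k x -> latc k ((c%:~R : R) *: x).
Proof.
move=> [w [y [Hw Hy ->]]].
exists ((c%:~R : 'F_gamma) *: w), (c *: y); split.
- by move=> j hj; rewrite mxE Hw ?mulr0.
- rewrite -scalemxAr -Hy; apply/matrixP => a b; by rewrite !mxE intrM.
- have -> : map_mx (fun c : int => (c%:~R : R)) (c *: y) = (c%:~R : R) *: map_mx (fun c : int => (c%:~R : R)) y.
    by apply/matrixP => a b; rewrite !mxE intrM.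
  by rewrite !scalemxAr !scalerA mulrC.
Qed.

Lemma latc_kill k k' c x : latc k x -> (c%:~R : 'F_gamma) = 0 -> latc k' ((c%:~R : R) *: x).
Proof.
move=> [w [y [Hw Hy ->]]] hc.
exists 0, (c *: y); split.
- by move=> j hj; rewrite mxE.
- rewrite mulmx0; apply/matrixP => a b; by rewrite !mxE intrM hc mul0r.
- have -> : map_mx (fun c : int => (c%:~R : R)) (c *: y) = (c%:~R : R) *: map_mx (fun c : int => (c%:~R : R)) y.
    by apply/matrixP => a b; rewrite !mxE intrM.
  by rewrite !scalemxAr !scalerA mulrC.
Qed.

Lemma latc_mono k k' x : (i k <= i k')%N -> latc k x -> latc k' x.
Proof.
move=> hk [w [y [Hw Hy ->]]]; exists w, y; split => //.
by move=> j hj; apply: Hw; apply: leq_trans hj.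
Qed.

Local Notation Lt := (inLat G B i).

Lemma L0 k : Lt k 0. Proof. by apply/latcE; apply: latc0. Qed.
Lemma Ladd k x y : Lt k x -> Lt k y -> Lt k (x + y).
Proof. by move=> /latcE hx /latcE hy; apply/latcE; apply: latc_add. Qed.
Lemma Lzs k c x : Lt k x -> Lt k ((c%:~R : R) *: x).
Proof. by move=> /latcE hx; apply/latcE; apply: latc_zs. Qed.
Lemma Lopp k x : Lt k x -> Lt k (- x).
Proof. by move=> /(Lzs (-1)); rewrite scaleN1r. Qed.
Lemma Lsub k x y : Lt k x -> Lt k y -> Lt k (x - y).
Proof. by move=> hx hy; apply: Ladd hx (Lopp hy). Qed.
Lemma Lkill k k' c x : Lt k x -> (c%:~R : 'F_gamma) = 0 -> Lt k' ((c%:~R : R) *: x).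
Proof. by move=> /latcE hx hc; apply/latcE; apply: (latc_kill _ hx hc). Qed.
Lemma Lmono k k' x : (i k <= i k')%N -> Lt k x -> Lt k' x.
Proof. by move=> h /latcE hx; apply/latcE; apply: latc_mono hx. Qed.
Lemma Lsum k (I : Type) (r : seq I) (P : pred I) (F : I -> 'cV[R]_n) :
  (forall j, P j -> Lt k (F j)) -> Lt k (\sum_(j <- r | P j) F j).
Proof. move=> h; apply: (@big_ind _ (fun v => Lt k v)) => //; [exact: L0 | exact: Ladd]. Qed.
End Lat.

Section Rank.
Variables (F : fieldType) (L : nat).
Definition Dm (T : {set 'I_L}) : 'M[F]_L := diag_mx (\row_(a < L) ((a \in T)%:R : F)).

Lemma Dm_mulE T p (Y : 'M[F]_(L, p)) :
  Dm T *m Y = \matrix_(a, b) ((a \in T)%:R * Y a b).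
Proof. by rewrite mul_diag_mx; apply/matrixP => a b; rewrite !mxE. Qed.

Lemma row_Dm T p (Y : 'M[F]_(L, p)) a :
  row a (Dm T *m Y) = if a \in T then row a Y else 0.
Proof.
apply/rowP => b; rewrite Dm_mulE !mxE.
by case: (a \in T); rewrite ?mul1r ?mul0r // mxE.
Qed.

Lemma rank_rowsub_enum (T : {set 'I_L}) p (Y : 'M[F]_(L, p)) :
  \rank (rowsub (fun a : 'I_#|T| => enum_val a) Y) = \rank (Dm T *m Y).
Proof.
apply/eqP; rewrite eqn_leq !mxrankS //.
- apply/row_subP => a; rewrite row_Dm; case: ifP => ha; last by rewrite sub0mx.
  rewrite -{1}(enum_rankK_in ha ha).
  have e := (@row_rowsub F _ _ _ (fun a : 'I_#|T| => enum_val a) Y (enum_rank_in ha a)).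
  by rewrite /= in e; rewrite -e row_sub.
- apply/row_subP => a; rewrite row_rowsub.
  have hT : enum_val a \in T := enum_valP a.
  have e : row (enum_val a) (Dm T *m Y) = row (enum_val a) Y by rewrite row_Dm hT.
  by rewrite -e row_sub.
Qed.

Lemma rank_colsub_enum (S : {set 'I_L}) q (Z : 'M[F]_(q, L)) :
  \rank (colsub (fun b : 'I_#|S| => enum_val b) Z) = \rank (Z *m Dm S).
Proof.
rewrite -mxrank_tr.
have -> : (colsub (fun b : 'I_#|S| => enum_val b) Z)^T = rowsub (fun b : 'I_#|S| => enum_val b) Z^T.
  by apply/matrixP => a b; rewrite !mxE.
by rewrite rank_rowsub_enum -mxrank_tr trmx_mul trmxK tr_diag_mx.
Qed.

Lemma subrankE (M : 'M[F]_L) T S : subrank M T S = \rank (Dm T *m (M *m Dm S)).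
Proof.
by rewrite /subrank mxsubrc rank_rowsub_enum mulmx_colsub rank_colsub_enum mulmxA.
Qed.

Lemma DmT : Dm setT = 1%:M.
Proof. by apply/matrixP => a b; rewrite !mxE inE mulr1n. Qed.
Lemma Dm0 : Dm set0 = 0.
Proof. by apply/matrixP => a b; rewrite !mxE inE mul0rn. Qed.
Lemma DmU T U : T :&: U = set0 -> Dm (T :|: U) = Dm T + Dm U.
Proof.
move=> hd; apply/matrixP => a b; rewrite !mxE in_setU -mulrnDl.
case hT: (a \in T); case hU: (a \in U) => //=; rewrite ?addr0 ?add0r //.
by move/setP: hd => /(_ a); rewrite !inE hT hU.
Qed.
Lemma DmI T U : Dm T *m Dm U = Dm (T :&: U).
Proof.
rewrite Dm_mulE; apply/matrixP => a b; rewrite !mxE in_setI.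
by case: (a \in T); case: (a \in U); rewrite /= ?mul1r ?mul0r ?mul0rn.
Qed.
Lemma sub_Dm (T U : {set 'I_L}) p (X : 'M[F]_(L, p)) : T \subset U -> (Dm T *m X <= Dm U *m X)%MS.
Proof.
move=> hTU; have -> : Dm T = Dm T *m Dm U by rewrite DmI (setIidPl hTU).
by rewrite -mulmxA submxMl.
Qed.
Lemma rank_Dm1 r p (X : 'M[F]_(L, p)) : (\rank (Dm [set r] *m X) <= 1)%N.
Proof.
have -> : Dm [set r] = delta_mx r r.
  apply/matrixP => a b; rewrite !mxE inE.
  by case: (eqVneq a r) => [->|ne]; rewrite /= ?mul0rn // eq_sym.
by rewrite (leq_trans (mxrankM_maxl _ _)) // mxrank_delta.
Qed.

Section Greedy.
Variables (p : nat) (N : 'M[F]_(L, p)) (pa : {perm 'I_L}) (I : {set 'I_L}).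
Definition Tset (j : nat) : {set 'I_L} := pa @: [set j' : 'I_L | (j <= j')%N].
Hypothesis hI : forall jo : 'I_L, jo \notin I ->
  \rank (Dm (Tset jo) *m N) != (\rank (Dm (Tset jo.+1) *m N)).+1.

Lemma Tset_split (jo : 'I_L) : Tset jo = pa jo |: Tset jo.+1 /\ pa jo \notin Tset jo.+1.
Proof.
have e : [set j' : 'I_L | (jo <= j')%N] = jo |: [set j' : 'I_L | (jo.+1 <= j')%N].
  by apply/setP => x; rewrite !inE leq_eqVlt val_eqE eq_sym.
split; first by rewrite /Tset e imsetU1.
by rewrite /Tset mem_imset ?inE ?ltnn //; apply: perm_inj.
Qed.

Lemma Tset0 : Tset 0 = setT.
Proof.
apply/setP => x; rewrite inE; apply/imsetP; exists (pa^-1 x)%g; first by rewrite inE.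
by rewrite permKV.
Qed.

Lemma TsetL : Tset L = set0.
Proof.
apply/setP => x; rewrite inE; apply/imsetP => -[y]; rewrite inE => hy.
by have := ltn_ord y; rewrite ltnNge hy.
Qed.

Lemma greedy d : (d <= L)%N ->
  (Dm (Tset (L - d)) *m N <= Dm (Tset (L - d) :&: (pa @: I)) *m N)%MS.
Proof.
elim: d => [|d IH] hd.
  by rewrite subn0 TsetL Dm0 mul0mx sub0mx.
have hj : (L - d.+1 < L)%N by rewrite ltn_subrL; apply/andP; split => //; apply: leq_ltn_trans hd.
have ej : ((L - d.+1).+1 = L - d)%N by rewrite subnSK.
set jo := Ordinal hj.
have IH' := IH (ltnW hd); rewrite -ej in IH'.
change (L - d.+1)%N with (nat_of_ord jo) in IH' |- *.
have [eT nT] := Tset_split jo.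
have dU : Dm (Tset jo) *m N = Dm [set pa jo] *m N + Dm (Tset jo.+1) *m N.
  rewrite eT DmU ?mulmxDl //; apply/setP => x; rewrite !inE.
  by case: eqP => // ->; rewrite (negPf nT).
have sub1 : Tset jo.+1 :&: (pa @: I) \subset Tset jo :&: (pa @: I).
  by rewrite setSI // eT subsetUr.
have sub2 : Tset jo.+1 \subset Tset jo by rewrite eT subsetUr.
case: (boolP (jo \in I)) => hjo.
  rewrite dU; apply: submx_trans (addmx_sub_adds (submx_refl (Dm [set pa jo] *m N)) IH') _.
  rewrite addsmx_sub !sub_Dm // sub1set !inE eT setU11 /=.
  by apply: imset_f.
have hr := hI hjo.
have le1 : (\rank (Dm (Tset jo.+1) *m N) <= \rank (Dm (Tset jo) *m N))%N.
  by apply: mxrankS; apply: sub_Dm.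
have le2 : (\rank (Dm (Tset jo) *m N) <= (\rank (Dm (Tset jo.+1) *m N)).+1)%N.
  rewrite dU; apply: leq_trans (mxrankS (addmx_sub_adds (submx_refl _) (submx_refl _))) _.
  apply: leq_trans (mxrank_adds_leqif _ _).1 _.
  by rewrite addnC -[X in (_ <= X)%N]addn1 leq_add2l rank_Dm1.
have eqr : \rank (Dm (Tset jo.+1) *m N) = \rank (Dm (Tset jo) *m N).
  apply/eqP; rewrite eqn_leq le1 /=.
  by move: le2; rewrite leq_eqVlt (negPf hr) /= ltnS.
have s2 : (Dm (Tset jo) *m N <= Dm (Tset jo.+1) *m N)%MS.
  by rewrite -(mxrank_leqif_sup (sub_Dm N sub2)).2 eqr eqxx.
exact: submx_trans s2 (submx_trans IH' (sub_Dm _ sub1)).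
Qed.

Lemma greedy_all : (N <= Dm (pa @: I) *m N)%MS.
Proof. by have := greedy (leqnn L); rewrite subnn Tset0 setTI DmT mul1mx. Qed.
End Greedy.

Lemma left_inv (A : 'M[F]_L) (S : {set 'I_L}) (pa : {perm 'I_L}) (I : {set 'I_L}) :
  A \in unitmx ->
  (forall jo : 'I_L, jo \notin I ->
    \rank (Dm (Tset pa jo) *m (A *m Dm S)) != (\rank (Dm (Tset pa jo.+1) *m (A *m Dm S))).+1) ->
  exists X : 'M[F]_L, forall l l', l \in S -> l' \in S ->
    \sum_(m in pa @: I) X l m * A m l' = (l == l')%:R.
Proof.
move=> hA hI.
have h1 : (Dm S <= A *m Dm S)%MS.
  by rewrite -{1}(mulKmx hA (Dm S)) submxMl.
have := submx_trans h1 (greedy_all hI) => /submxP [X hX].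
exists X => l l' hl hl'.
have e : A *m Dm S = \matrix_(a, b) (A a b * (b \in S)%:R).
  by rewrite mul_mx_diag; apply/matrixP => a b; rewrite !mxE.
move/matrixP: hX => /(_ l l'); rewrite e Dm_mulE !mxE hl mulr1n => ->.
rewrite big_mkcond /=; apply: eq_bigr => m _; rewrite !mxE.
by rewrite hl' mulr1; case: (m \in _); rewrite ?mul1r ?mul0r ?mulr0.
Qed.
End Rank.

Lemma alg2 (V : zmodType) (a b c d : V) : (a - b) - (c - d) = (a - c) - (b - d).
Proof. by rewrite !opprB addrACA [RHS]addrACA (addrC (-b)). Qed.
Lemma alg1 (V : zmodType) (a b c d : V) : (a - b) - (c - d) + (b - d) = a - c.
Proof. by rewrite alg2 subrK. Qed.
Lemma alg3 (V : zmodType) (a b c D : V) : (a + D - b) - (a - c) - D = c - b.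
Proof. by rewrite alg2 (addrC a D) addrK addrAC subrr sub0r opprB. Qed.

Lemma bigmin_le_ord (N : nat) (J : {set 'I_N}) (ko : 'I_N) :
  ko \in J -> (\big[minn/N]_(j in J) (nat_of_ord j) <= ko)%N.
Proof.
move=> hJ; have : ko \in index_enum 'I_N by rewrite mem_index_enum.
elim: (index_enum _) => // a r IHr; rewrite inE big_cons => /orP [/eqP <-|hr].
  by rewrite hJ geq_minl.
case: ifP => _; last exact: IHr hr.
exact: leq_trans (geq_minr _ _) (IHr hr).
Qed.

Section Abs.
Variables (R : realType) (n N : nat) (lat : nat -> 'cV[R]_n -> Prop) (Q : nat -> 'cV[R]_n -> 'cV[R]_n).
Hypotheses (l0 : forall k, lat k 0)
  (lsub : forall k x y, lat k x -> lat k y -> lat k (x - y))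
  (lmono : forall a b x, (a <= b)%N -> (b < N)%N -> lat a x -> lat b x)
  (qin : forall k x, (k < N)%N -> lat k (Q k x))
  (qtr : forall k x y, (k < N)%N -> lat k y -> Q k (x + y) = Q k x + y).

Lemma lopp k x : lat k x -> lat k (- x).
Proof. by move=> h; rewrite -sub0r; apply: lsub. Qed.
Lemma ladd k x y : lat k x -> lat k y -> lat k (x + y).
Proof. by move=> hx hy; rewrite -[y]opprK; apply: lsub => //; apply: lopp. Qed.
Lemma lsum k (I : Type) (r : seq I) (P : pred I) (F : I -> 'cV[R]_n) :
  (forall j, P j -> lat k (F j)) -> lat k (\sum_(j <- r | P j) F j).
Proof. by move=> h; apply: (@big_ind _ (fun v => lat k v)) => //; apply: ladd. Qed.

Definition vk (v : 'cV[R]_n) (j : nat) := modL (Q j) (Q j.+1 v).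

Lemma vk_in j v : (j.+1 < N)%N -> lat j.+1 (vk v j).
Proof.
move=> hj; rewrite /vk /modL; apply: lsub; first exact: qin.
by apply: (lmono (leqnSn j) hj); apply: qin; apply: ltnW.
Qed.

Lemma term_diff k j v v' : (k.+1 < N)%N -> (j.+1 < N)%N -> lat k.+1 (v - v') ->
  lat k (vk v j - vk v' j - (if (j == k)%N then v - v' else 0)).
Proof.
move=> hk hj hD; set D := v - v'.
have ev : v = v' + D by rewrite /D addrC subrK.
case: (ltngtP j k) => hjk.
- rewrite subr0; apply: lsub; apply: (lmono hjk (ltnW hk)); exact: vk_in.
- have hD1 : lat j.+1 D by apply: (lmono _ hj hD); apply: ltnW.
  have hD2 : lat j D by apply: (lmono hjk (ltnW hj) hD).
  rewrite /vk /modL ev (qtr _ hj hD1) (qtr _ (ltnW hj) hD2).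
  by rewrite opprD addrACA subrr addr0 subrr subr0; apply: l0.
- rewrite hjk /vk /modL ev (qtr _ hk) // -/D.
  rewrite alg3; apply: lsub; apply: qin; exact: ltnW.
Qed.

Lemma delta_diff (J : {set 'I_N}) (ko : 'I_N) v v' :
  ko \in J -> (forall j : 'I_N, j \in J -> (j.+1 < N)%N) -> lat ko.+1 (v - v') ->
  lat ko (modL (Q (\big[minn/N]_(j in J) (nat_of_ord j))) (\sum_(j in J) vk v j)
        - modL (Q (\big[minn/N]_(j in J) (nat_of_ord j))) (\sum_(j in J) vk v' j)
        - (v - v')).
Proof.
move=> hko hJ hD.
have hkN : (ko.+1 < N)%N := hJ ko hko.
set jm := \big[minn/N]_(j in J) (nat_of_ord j).
have hjm : (jm <= ko)%N by apply: bigmin_le_ord.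
have hjmN : (jm < N)%N by apply: leq_ltn_trans hjm (ltn_ord ko).
have hs : lat ko (\sum_(j in J) (vk v j - vk v' j - (if (nat_of_ord j == nat_of_ord ko)%N then v - v' else 0))).
  apply: lsum => j hj; apply: term_diff => //; exact: hJ.
have es : \sum_(j in J) (vk v j - vk v' j - (if (nat_of_ord j == nat_of_ord ko)%N then v - v' else 0))
   = \sum_(j in J) vk v j - \sum_(j in J) vk v' j - (v - v').
  rewrite !sumrB; congr (_ - _).
  rewrite (bigD1 ko) //= eqxx big1 ?addr0 // => j /andP [_ hne].
  by rewrite val_eqE (negPf hne).
rewrite es in hs.
rewrite /modL; set S1 := \sum_(j in J) vk v j; set S2 := \sum_(j in J) vk v' j.
rewrite (alg2 S1) addrAC; apply: lsub => //.
by apply: lsub; apply: (lmono hjm (ltn_ord ko)); apply: qin.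
Qed.
End Abs.

Unset Implicit Arguments.

Theorem theorem1 (R : realType) (gamma L n K : nat)
  (G : 'M['F_gamma]_(n, K)) (B : 'M[R]_n) (i : nat -> nat)
  (Q : nat -> 'cV[R]_n -> 'cV[R]_n)
  (pi : {perm 'I_(2 * L)}) (palpha : {perm 'I_L})
  (A : 'M[int]_L) (beta : 'I_L -> R) :
  prime gamma -> (0 < L)%N -> (0 < n)%N -> (0 < K)%N ->
  \rank G = K -> B \in unitmx ->
  (forall k, (k.+1 < 2 * L)%N -> (i k <= i k.+1)%N) -> (i (2 * L).-1 <= K)%N ->
  (forall k, (k < 2 * L)%N -> is_nearest_quantizer (inLat G B i k) (Q k)) ->
  (forall l : 'I_L, lat_sub (inLat G B i (sh pi l)) (inLat G B i (co pi l))) ->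
  Ared gamma A \in unitmx ->
  (forall l, 0 < beta l) ->
  forall d t t' : 'I_L -> 'cV[R]_n,
  (forall l, Q (sh pi l) (beta l *: d l) = 0) ->
  (forall l, inLat G B i (co pi l) (t l) /\ Q (sh pi l) (t l) = 0) ->
  (forall l, inLat G B i (co pi l) (t' l) /\ Q (sh pi l) (t' l) = 0) ->
  (forall m, delta (inLat G B i) Q pi gamma A palpha beta t d m =
             delta (inLat G B i) Q pi gamma A palpha beta t' d m) ->
  forall m, vv Q pi A beta t d m = vv Q pi A beta t' d m.
Proof.
move=> gp Lpos npos Kpos rG uB hi hiK hQ hsc hA hb d t t' hd ht ht' hdel.
have imono : forall a b, (a <= b)%N -> (b < 2 * L)%N -> (i a <= i b)%N.
  move=> a b hab hbL.
  have gen : forall c, (a + c < 2 * L)%N -> (i a <= i (a + c))%N.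
    elim => [|c IH] h; first by rewrite addn0.
    apply: leq_trans (IH _) _; first by lia.
    by rewrite addnS; apply: (hi); rewrite -addnS.
  have := gen (b - a)%N; rewrite subnKC //; apply; done.
have l0 : forall k, inLat G B i k 0 := L0 G B i gp.
have lsub : forall k x y, inLat G B i k x -> inLat G B i k y -> inLat G B i k (x - y).
  by move=> k x y; apply: Lsub.
have lmono : forall a b x, (a <= b)%N -> (b < 2 * L)%N -> inLat G B i a x -> inLat G B i b x.
  by move=> a b x h1 h2; apply: Lmono => //; apply: (imono).
have qin : forall k x, (k < 2 * L)%N -> inLat G B i k (Q k x).
  by move=> k x hk; case: (hQ k hk).
have qtr : forall k x y, (k < 2 * L)%N -> inLat G B i k y -> Q k (x + y) = Q k x + y.
  by move=> k x y hk hy; case: (hQ k hk) => _ _ h; apply: h.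
have shN : forall l, (sh pi l < 2 * L)%N by move=> l; exact: ltn_ord.
have coN : forall l, (co pi l < 2 * L)%N by move=> l; exact: ltn_ord.
pose x := fun l => t l - Q (sh pi l) (t l - beta l *: d l).
pose x' := fun l => t' l - Q (sh pi l) (t' l - beta l *: d l).
pose e := fun l => x l - x' l.
have E1 : forall l, inLat G B i (co pi l) (e l).
  move=> l; rewrite /e /x /x'.
  apply: (lsub); apply: (lsub).
  - exact: (ht l).1.
  - by apply: (hsc); apply: (qin _ _ (shN l)).
  - exact: (ht' l).1.
  - by apply: (hsc); apply: (qin _ _ (shN l)).
have E2 : forall l, inLat G B i (sh pi l) (e l) -> e l = 0.
  move=> l he.
  have hmu : inLat G B i (sh pi l) (t l - t' l).
    rewrite -(alg1 (t l) (Q (sh pi l) (t l - beta l *: d l)) (t' l) (Q (sh pi l) (t' l - beta l *: d l))).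
    by apply: Ladd => //; apply: (lsub); apply: (qin _ _ (shN l)).
  have : Q (sh pi l) (t l) = Q (sh pi l) (t' l) + (t l - t' l).
    by rewrite -(qtr _ _ _ (shN l) hmu) (addrC (t' l)) subrK.
  rewrite (ht l).2 (ht' l).2 add0r => /esym /eqP; rewrite subr_eq0 => /eqP htt.
  by rewrite /e /x /x' htt subrr.
pose u := fun m => \sum_(l < L) (A m l)%:~R *: e l.
pose Xv := fun m => \sum_(l < L) (A m l)%:~R *: x l.
pose Xv' := fun m => \sum_(l < L) (A m l)%:~R *: x' l.
have evv : forall m, vv Q pi A beta t d m = Xv m - Q 0 (Xv m) by [].
have evv' : forall m, vv Q pi A beta t' d m = Xv' m - Q 0 (Xv' m) by [].
have eXu : forall m, Xv m - Xv' m = u m.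
  by move=> m; rewrite /u /Xv /Xv' -sumrB; apply: eq_bigr => l _; rewrite -scalerBr.
have L2 : (0 < 2 * L)%N by lia.
have fw : forall k m, (k < 2 * L)%N -> inLat G B i k (u m) ->
    inLat G B i k (vv Q pi A beta t d m - vv Q pi A beta t' d m).
  move=> k m hk h; rewrite evv evv' alg2 eXu; apply: (lsub) => //.
  by apply: (lsub); apply: (lmono 0%N) => //; apply: (qin).
have bw : forall k m, (k < 2 * L)%N ->
    inLat G B i k (vv Q pi A beta t d m - vv Q pi A beta t' d m) -> inLat G B i k (u m).
  move=> k m hk h.
  have h2 : inLat G B i k (Q 0 (Xv m) - Q 0 (Xv' m)).
    by apply: (lsub); apply: (lmono 0%N) => //; apply: (qin).
  by have := Ladd gp h h2; rewrite evv evv' alg2 eXu subrK.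
have uin : forall k m, (forall l, inLat G B i k (e l)) -> inLat G B i k (u m).
  by move=> k m h; apply: (Lsum gp) => l _; apply: (Lzs gp).

have step : forall k, (k.+1 < 2 * L)%N -> (forall l, inLat G B i k.+1 (e l)) ->
    forall l, inLat G B i k (e l).
  move=> k hk IH.
  have hk' : (k < 2 * L)%N by apply: ltnW.
  pose ko : 'I_(2 * L) := Ordinal hk'.
  have outS : forall l, l \notin Lset (inLat G B i) pi k -> inLat G B i k (e l).
    move=> l hl.
    case: (leqP (sh pi l) k) => hs.
      case: (leqP k.+1 (co pi l)) => hc.
        exfalso; move/negP: hl; apply; rewrite inE; apply/asboolP.
        split; [|split] => z hz.
        - exact: (lmono _ _ _ hs hk' hz).
        - exact: (lmono _ _ _ (leqnSn k) hk hz).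
        - exact: (lmono _ _ _ hc (coN l) hz).
      by rewrite ltnS in hc; apply: (lmono _ _ _ hc hk' (E1 l)).
    have -> : e l = 0 by apply: (E2); apply: (lmono _ _ _ hs (shN l) (IH l)).
    exact: l0.
  have Min : forall m, ko \in Jset (inLat G B i) pi gamma A palpha ((palpha^-1)%g m) ->
      inLat G B i k (u m).
    move=> m hm.
    have hv := fw k.+1 m hk (uin _ m IH).
    set J := Jset (inLat G B i) pi gamma A palpha ((palpha^-1)%g m) in hm.
    have hJ : forall j : 'I_(2 * L), j \in J -> (j.+1 < 2 * L)%N.
      by move=> j; rewrite /J /Jset inE => /andP [].
    have hdd := delta_diff l0 lsub lmono qin qtr hm hJ hv.
    have hdm := hdel m.
    have nz : (J == set0) = false by apply/negbTE/set0Pn; exists ko.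
    rewrite /delta -/J nz in hdm.
    have hdm' : modL (Q (\big[minn/(2 * L)%N]_(j in J) (nat_of_ord j)))
                  (\sum_(j in J) vk Q (vv Q pi A beta t d m) j) =
                modL (Q (\big[minn/(2 * L)%N]_(j in J) (nat_of_ord j)))
                  (\sum_(j in J) vk Q (vv Q pi A beta t' d m) j) := hdm.
    rewrite hdm' subrr sub0r in hdd.
    apply: (bw k m hk'); rewrite -[X in inLat _ _ _ _ X]opprK.
    exact: (Lopp gp).
  move=> l.
  case: (boolP (l \in Lset (inLat G B i) pi k)) => hl; last exact: (outS).
  set S := Lset (inLat G B i) pi k in hl outS.
  set I := [set j : 'I_L | ko \in Jset (inLat G B i) pi gamma A palpha j].
  have hI : forall jo : 'I_L, jo \notin I ->
      \rank (Dm 'F_gamma (Tset palpha jo) *m (Ared gamma A *m Dm 'F_gamma S))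
      != (\rank (Dm 'F_gamma (Tset palpha jo.+1) *m (Ared gamma A *m Dm 'F_gamma S))).+1.
    move=> jo; rewrite /I inE /Jset inE /= hk /= -!subrankE; exact.
  have [X hX] := @left_inv _ _ (Ared gamma A) S palpha I hA hI.
  have MinS : forall m, m \in palpha @: I ->
      inLat G B i k (\sum_(l' in S) (A m l')%:~R *: e l').
    move=> m /imsetP [j hj ->].
    have hm : ko \in Jset (inLat G B i) pi gamma A palpha ((palpha^-1)%g (palpha j)).
      by rewrite permK; rewrite inE in hj.
    have := Min _ hm; rewrite /u (bigID (fun l' => l' \in S)) /= => h.
    have h2 : inLat G B i k (\sum_(l' < L | l' \notin S) (A (palpha j) l')%:~R *: e l').
      by apply: (Lsum gp) => l' hl'; apply: (Lzs gp); apply: (outS).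
    by have := Lsub gp h h2; rewrite addrK.
  pose phi := fun c : 'F_gamma => (nat_of_ord c)%:Z.
  pose W := \sum_(m in palpha @: I) ((phi (X l m))%:~R : R) *:
              \sum_(l' in S) (A m l')%:~R *: e l'.
  have hW : inLat G B i k W.
    by apply: (Lsum gp) => m hm; apply: (Lzs gp); apply: (MinS).
  have eW : W - e l = \sum_(l' in S)
      (((\sum_(m in palpha @: I) phi (X l m) * A m l') - (l == l')%:Z)%:~R : R) *: e l'.
    rewrite /W; under eq_bigr do rewrite scaler_sumr.
    rewrite exchange_big /=.
    have -> : e l = \sum_(l' in S) (((l == l')%:Z)%:~R : R) *: e l'.
      rewrite (bigD1 l) //= eqxx scale1r big1 ?addr0 // => l' /andP [_ hne].
      by rewrite eq_sym (negPf hne) scale0r.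
    rewrite -sumrB; apply: eq_bigr => l' _.
    rewrite intrB scalerBl mulrz_sumr scaler_suml; congr (_ - _).
    by apply: eq_bigr => m _; rewrite scalerA intrM.
  have hdiff : inLat G B i k (W - e l).
    rewrite eW; apply: (Lsum gp) => l' hl'; apply: (Lkill gp _ (IH l')).
    rewrite intrB mulrz_sumr.
    rewrite (eq_bigr (fun m => X l m * Ared gamma A m l')); last first.
      by move=> m _; rewrite intrM /phi intr_natE natF /Ared mxE.
    by rewrite hX // intr_natE subrr.
  by have := Lsub gp hW hdiff; rewrite opprB addrC subrK.
have all : forall c k, (k + c = (2 * L).-1)%N -> forall l, inLat G B i k (e l).
  elim => [|c IHc] k hkc l.
    rewrite addn0 in hkc; rewrite hkc.
    apply: (lmono _ _ _ _ _ (E1 l)); last by lia.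
    by have := coN l; lia.
  apply: (step); first by lia.
  by apply: (IHc); lia.
have he0 := all (2 * L).-1 0%N (add0n _).
move=> m; rewrite evv evv'.
have hu := uin 0%N m he0.
have -> : Xv m = Xv' m + u m by rewrite -eXu addrC subrK.
by rewrite (qtr 0%N _ _ L2 hu) opprD addrACA subrr addr0.
Qed.
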